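(* Let $X$ be a pure simplicial complex of dimension $d$ with $n\ge1$ facets and $v$ vertices. Then $X$ is stacked if and only if $v=n+d$ and for every pair of facets $f,f'$ of $X$ (including $f=f'$) there is a unique path from $f$ to $f'$.
   Context: A simplicial complex $X$ on a finite vertex set $V$ is a family of subsets (faces) of $V$ closed under taking subsets, every element of $V$ lying in some face; facets are inclusion-maximal faces. $X$ is pure of dimension $d$ if every facet has $d+1$ elements; a codimension one face is a face with $d$ elements. $X$ is stacked if it is pure of some dimension $d$ and its facets can be ordered $F_0,F_1,\dots,F_k$ (a stacking order) such that for each $p\ge 1$, $F_p$ contains exactly one vertex $v_p$ not in $F_0\cup\dots\cup F_{p-1}$ (called the free vertex of $F_p$), and $F_p\setminus\{v_p\}\subseteq F_j$ for some $j<p$. A walk is a sequence of facets $f_1,\dots,f_p$ ($p\ge 1$) such that each $f_i\cap f_{i+1}$ has exactly $d$ elements; a path is a walk in which the faces $f_i\cap f_{i+1}$, $1\le i<p$, are pairwise distinct; it is a path from $f_1$ to $f_p$. (The one-term sequence $f$ is a path from $f$ to $f$.) *)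

(* Defs.v *)
From mathcomp Require Import all_boot.
Set Implicit Arguments. Unset Strict Implicit. Unset Printing Implicit Defensive.

Section Complexes.
Variable V : finType.

Definition is_complex (X : {set {set V}}) : Prop :=
  (forall F G : {set V}, F \in X -> G \subset F -> G \in X) /\
  (forall x : V, exists F, F \in X /\ x \in F).

Definition facets (X : {set {set V}}) : {set {set V}} :=
  [set F in X | [forall G in X, (F \subset G) ==> (G == F)]].

Definition pure (X : {set {set V}}) (d : nat) : Prop :=
  forall F, F \in facets X -> #|F| = d.+1.

Definition stacking_order (X : {set {set V}}) (s : seq {set V}) : Prop :=
  0 < size s /\ uniq s /\ (forall F, F \in s <-> F \in facets X) /\
  forall p, 0 < p < size s ->
    exists v : V,
      nth set0 s p :\: (\bigcup_(G <- take p s) G) = [set v] /\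
      exists2 j, j < p & nth set0 s p :\ v \subset nth set0 s j.

Definition stacked (X : {set {set V}}) : Prop :=
  exists d, pure X d /\ exists s, stacking_order X s.

Definition is_walk (X : {set {set V}}) (d : nat) (w : seq {set V}) : Prop :=
  0 < size w /\
  (forall i, i < size w -> nth set0 w i \in facets X) /\
  (forall i, i.+1 < size w -> #|nth set0 w i :&: nth set0 w i.+1| = d).

Definition is_path (X : {set {set V}}) (d : nat) (w : seq {set V}) : Prop :=
  is_walk X d w /\
  uniq [seq nth set0 w i :&: nth set0 w i.+1 | i <- iota 0 (size w).-1].

Definition is_path_from (X : {set {set V}}) (d : nat) (f f' : {set V})
    (w : seq {set V}) : Prop :=
  is_path X d w /\ nth set0 w 0 = f /\ nth set0 w (size w).-1 = f'.

End Complexes.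

(* Main.v *)
Require Import Defs.
From mathcomp Require Import all_boot.
From mathcomp Require Import zify.
Set Implicit Arguments. Unset Strict Implicit. Unset Printing Implicit Defensive.

Section S.
Variable V : finType.
Variable d : nat.
Implicit Types (w t : seq {set V}) (a b x : {set V}).

Fixpoint rdg w : seq {set V} :=
  match w with
  | a :: ((b :: _) as t) => (a :&: b) :: rdg t
  | _ => [::]
  end.

Definition pth (P : pred {set V}) w :=
  [&& w != [::], all P w, all (fun r : {set V} => #|r| == d) (rdg w) & uniq (rdg w)].

Lemma rdg_rcons w x : rdg (rcons w x) = if w is [::] then [::] else rcons (rdg w) (last x w :&: x).
Proof.
elim: w => [//|a t IH] /=.
case: t IH => [|b t'] IH //=.
by rewrite /= in IH; rewrite IH.
Qed.

Lemma rdg_rev w : rdg (rev w) = rev (rdg w).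
Proof.
elim: w => [//|a t IH].
rewrite rev_cons rdg_rcons.
case: t IH => [//|b t] IH.
have Hl : last a (rev (b :: t)) = b by rewrite rev_cons last_rcons.
case E: (rev (b :: t)) => [|c u].
  by move: (congr1 size E); rewrite size_rev.
rewrite -E IH Hl /= rev_cons setIC.
done.
Qed.

Lemma pth_rev P w : pth P w -> pth P (rev w).
Proof.
case/and4P=> H1 H2 H3 H4; apply/and4P; split.
- by rewrite -size_eq0 size_rev size_eq0.
- by rewrite all_rev.
- by rewrite rdg_rev all_rev.
- by rewrite rdg_rev rev_uniq.
Qed.

Lemma head_rev w (x0 : {set V}) : head x0 (rev w) = last x0 w.
Proof. by case/lastP: w => [|l y] //; rewrite rev_rcons last_rcons. Qed.

Lemma last_rev w (x0 : {set V}) : last x0 (rev w) = head x0 w.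
Proof. by case: w => [|a l] //; rewrite rev_cons last_rcons. Qed.


Lemma rdg_nth w : rdg w = [seq nth set0 w i :&: nth set0 w i.+1 | i <- iota 0 (size w).-1].
Proof.
elim: w => [//|a t IH]; case: t IH => [//|b t] IH.
rewrite /= in IH *; rewrite IH; congr cons.
have -> : iota 1 (size t) = map (addn 1) (iota 0 (size t)) by rewrite -iotaDl.
by rewrite -map_comp; apply: eq_map => i /=.
Qed.

Lemma is_path_pth X w : is_path X d w <-> pth (fun g => g \in facets X) w.
Proof.
rewrite /is_path /is_walk /pth rdg_nth; split.
- case=> [[H1 [H2 H3]] H4]; apply/and4P; split => //.
  + by rewrite -size_eq0 -lt0n.
  + by apply/(all_nthP set0).
  + rewrite all_map; apply/allP => i; rewrite mem_iota => /andP [_ Hi] /=.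
    by apply/eqP; apply: H3; lia.
- case/and4P=> H1 H2 H3 H4; split => //; split; first by rewrite lt0n size_eq0.
  split; first by apply/(all_nthP set0).
  move=> i Hi; move: H3; rewrite all_map => /allP /(_ i) /=; rewrite mem_iota.
  by move=> H; apply/eqP; apply: H; lia.
Qed.

Lemma is_path_from_pth X f f' w : is_path_from X d f f' w <->
  pth (fun g => g \in facets X) w /\ head set0 w = f /\ last set0 w = f'.
Proof.
rewrite /is_path_from is_path_pth nth0 nth_last; done.
Qed.


Lemma cardUD (A B : {set V}) : #|A :|: B| = #|A| + #|B :\: A|.
Proof. have := cardsUI A B; have := cardsID A B; rewrite setIC; lia. Qed.

Lemma rdg_cat l a r : rdg (l ++ a :: r) = rdg (rcons l a) ++ rdg (a :: r).
Proof.
elim: l => [//|c l IH] /=.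
case: l IH => [|e l] IH //=.
by rewrite /= in IH; rewrite IH.
Qed.

Lemma rdg_sub a t r : r \in rdg (a :: t) -> exists2 g, g \in t & r \subset g.
Proof.
elim: t a => [//|b t IH] a /=; rewrite inE => /orP [/eqP ->|].
  by exists b; rewrite ?inE ?eqxx ?subsetIr.
by case: t IH => [//|c t] IH /IH [g Hg Hr]; exists g => //; rewrite inE Hg orbT.
Qed.

Lemma pth_sub (P Q : pred {set V}) w : (forall x, P x -> Q x) -> pth P w -> pth Q w.
Proof.
move=> PQ /and4P [H1 H2 H3 H4]; apply/and4P; split => //.
by apply/allP => x /(allP H2) /PQ.
Qed.

Lemma pth_cons P a b t : pth P (a :: b :: t) ->
  [/\ pth P (b :: t), P a, #|a :&: b| = d & (a :&: b) \notin rdg (b :: t)].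
Proof.
case/and4P => _ /= /andP [Pa Pt] /andP [/eqP Hab Ht] /andP [Hn Hu].
split => //; apply/and4P; split => //.
Qed.

Section Card.
Variable P : pred {set V}.
Hypothesis HP : forall g, P g -> #|g| = d.+1.

Lemma adj_neq a b : P a -> #|a :&: b| = d -> a != b.
Proof. by move=> Pa Hab; apply/eqP => E; move: Hab; rewrite E setIid HP -?E //; lia. Qed.

Lemma adj_same a b (R : {set V}) : P a -> P b -> #|R| = d -> R \subset a -> R \subset b -> a != b ->
  a :&: b = R.
Proof.
move=> Pa Pb HR Ra Rb Nab.
have Hle : #|a :&: b| <= d.
  rewrite leqNgt; apply/negP => H.
  have E1 : a :&: b = a by apply/eqP; rewrite eqEcard subsetIl HP.
  have E2 : a = b by apply/eqP; rewrite eqEcard -{1}E1 subsetIr /= !HP.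
  by rewrite E2 eqxx in Nab.
by apply/eqP; rewrite eq_sym eqEcard subsetI Ra Rb HR.
Qed.

End Card.


Lemma pth_all P Q w : pth P w -> all Q w -> pth Q w.
Proof. by case/and4P => H1 _ H3 H4 H2; apply/and4P. Qed.

Definition uniqPth P := forall w1 w2, pth P w1 -> pth P w2 ->
  head set0 w1 = head set0 w2 -> last set0 w1 = last set0 w2 -> w1 = w2.
Definition existPth (P : pred {set V}) := forall a b, P a -> P b ->
  exists w, pth P w /\ head set0 w = a /\ last set0 w = b.

Lemma suffix_has Q (R : {set V}) w : pth Q w -> has (fun g : {set V} => R \subset g) w ->
  exists a0 t', [/\ R \subset a0, pth Q (a0 :: t'), last a0 t' = last set0 w
                 & ~~ has (fun g : {set V} => R \subset g) t'].
Proof.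
elim: w => [//|a t IH] Hp /=.
case Ht: (has _ t) => /=.
  case: t IH Hp Ht => [//|b t] IH Hp Ht.
  have [Hp' _ _ _] := pth_cons Hp.
  by have [a0 [t' [H1 H2 H3 H4]]] := IH Hp' Ht; exists a0, t'; split.
by rewrite orbF => Ha; exists a, t; split => //; rewrite Ht.
Qed.

Section Leaf.
Variables (s' : seq {set V}) (F : {set V}) (v : V).
Let P := fun g : {set V} => g \in rcons s' F.
Hypothesis HP : forall g, P g -> #|g| = d.+1.
Hypothesis HvF : v \in F.
Hypothesis Hv : forall g, g \in s' -> v \notin g.
Let R := F :\ v.

Lemma cardR : #|R| = d.
Proof. have := cardsD1 v F; rewrite HvF HP; last by rewrite /P mem_rcons mem_head. rewrite -/R; lia. Qed.

Lemma PF : P F.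
Proof. by rewrite /P mem_rcons mem_head. Qed.

Lemma Ps' g : g \in s' -> P g.
Proof. by rewrite /P mem_rcons inE => ->; rewrite orbT. Qed.

Lemma P_neq g : P g -> g != F -> g \in s'.
Proof. by rewrite /P mem_rcons inE => /orP [->|]. Qed.

Lemma RF : R \subset F.
Proof. exact: subsetDl. Qed.

Lemma K1 g : g \in s' -> #|g :&: F| = d -> g :&: F = R.
Proof.
move=> Hg Hc; apply/eqP; rewrite eqEcard cardR Hc leqnn andbT.
apply/subsetP => x; rewrite !inE => /andP [Hxg ->]; rewrite andbT.
by apply/eqP => E; move: (Hv Hg); rewrite -E Hxg.
Qed.

Lemma adjF g : P g -> #|g :&: F| = d -> g :&: F = R.
Proof.
move=> Pg Hc; apply: K1 => //; apply: P_neq => //.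
exact: (adj_neq HP Pg Hc).
Qed.

Lemma K2 l a b r : pth P (l ++ a :: F :: b :: r) -> False.
Proof.
case/and4P => _ Ha Hc Hu.
rewrite rdg_cat in Hc Hu.
move: Hu; rewrite cat_uniq => /and3P [_ _] /= /andP [Hu _].
move: Hc; rewrite all_cat => /andP [_] /= /and3P [/eqP H1 /eqP H2 _].
have Pa : P a by apply: (allP Ha); rewrite mem_cat mem_head orbT.
have Pb : P b by apply: (allP Ha); rewrite mem_cat !inE eqxx !orbT.
have E1 := adjF Pa H1.
have E2 : F :&: b = R by rewrite setIC; apply: adjF => //; rewrite setIC.
by move: Hu; rewrite E1 E2 inE eqxx.
Qed.

Lemma K2' l r : pth P (l ++ F :: r) -> l = [::] \/ r = [::].
Proof.
case/lastP: l => [|l a]; first by left.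
case: r => [|b r]; first by right.
by rewrite cat_rcons => /K2.
Qed.

Lemma K2e w : pth P w -> F \in w -> head set0 w = F \/ last set0 w = F.
Proof.
move=> Hp /splitPr Hs; case: Hs Hp => l r /K2' [->|->]; first by left.
by right; rewrite last_cat.
Qed.

Lemma K3 t : pth P (F :: t) -> last F t = F -> t = [::].
Proof.
case: t => [//|b t] Hp Hl.
move: Hl Hp => /= Hl; rewrite (lastI b t) Hl.
case: (belast b t) => [|c m] /and4P [_ Ha Hc Hu].
  by move: Hc => /= /andP [/eqP]; rewrite setIid HP ?PF //; lia.
have Erd : rdg (F :: rcons (c :: m) F) = (F :&: c) :: rdg (rcons (c::m) F) by [].
rewrite Erd rdg_rcons in Hc Hu.
move: Hc => /= /andP [/eqP H1]; rewrite all_rcons => /andP [/eqP H2 _].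
move: Hu => /= /andP [Hu _].
have Pc : P c by apply: (allP Ha); rewrite !inE eqxx orbT.
have Pe : P (last F (c :: m)).
  by apply: (allP Ha); rewrite inE mem_rcons -/(last c m) mem_last orbT.
have E1 : F :&: c = R by rewrite setIC; apply: adjF => //; rewrite setIC.
have E2 := adjF Pe H2.
by move: Hu; rewrite mem_rcons E1 /= E2 inE eqxx.
Qed.


Lemma L_tail t : pth P (F :: t) -> t != [::] -> last F t != F -> pth (mem s') t.
Proof.
case: t => [//|b t] Hp _ Hl.
have [Hp' _ _ _] := pth_cons Hp.
apply: (pth_all Hp'); apply/allP => x Hx.
have Px : P x by move: Hp' => /and4P [_ /allP H _ _]; apply: H.
apply: P_neq => //; apply/eqP => E; subst x.
move: Hx => /splitPr Hs; case: Hs Hp Hl => l r.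
rewrite -cat_cons => /K2' [//|->].
by rewrite /= last_cat /= eqxx.
Qed.

Lemma claimA : uniqPth (mem s') -> forall t1 t2, pth P (F :: t1) -> pth P (F :: t2) ->
  last F t1 = last F t2 -> t1 = t2.
Proof.
move=> IH t1 t2 H1 H2 El.
case: t1 H1 El => [|g1 u1] H1 El.
  by rewrite (K3 H2) // -El.
case: t2 H2 El => [|g2 u2] H2 El.
  by have := K3 H1 El.
have Ne : last F (g1 :: u1) != F by apply/eqP => /(K3 H1).
have Q1 := L_tail H1 isT Ne.
have Q2 : pth (mem s') (g2 :: u2) by apply: L_tail H2 isT _; rewrite -El.
have [_ _ C1 N1] := pth_cons H1.
have [_ _ C2 N2] := pth_cons H2.
have G1 : g1 \in s' by move: Q1 => /and4P [_ /= /andP [] //].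
have G2 : g2 \in s' by move: Q2 => /and4P [_ /= /andP [] //].
have E1 : F :&: g1 = R by rewrite setIC; apply: K1 => //; rewrite setIC.
have E2 : F :&: g2 = R by rewrite setIC; apply: K1 => //; rewrite setIC.
have [Eg|Ng] := eqVneq g1 g2.
  by subst g2; have := IH _ _ Q1 Q2 erefl El => ->.
have R1 : R \subset g1 by rewrite -E1 subsetIr.
have R2 : R \subset g2 by rewrite -E2 subsetIr.
have E21 : g2 :&: g1 = R.
  by apply: (adj_same HP) => //; [apply: Ps'|apply: Ps'|apply: cardR|rewrite eq_sym].
have Q3 : pth (mem s') (g2 :: g1 :: u1).
  move: Q1 => /and4P [_ A1 C3 U3]; apply/and4P; split => //.
  - by rewrite /= G2.
  - by rewrite [rdg _]/= /= E21 cardR eqxx.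
  - by rewrite [rdg _]/= /= E21 -E1 N1.
have := IH _ _ Q3 Q2 erefl El => [[E]].
move: H2; rewrite -E => /and4P [_ _ _] /= /andP [].
by rewrite E2 E21 inE eqxx.
Qed.

Lemma uniq_step : uniqPth (mem s') -> uniqPth P.
Proof.
move=> IH.
have Hh : forall w1 w2, pth P w1 -> pth P w2 -> head set0 w1 = F -> head set0 w2 = F ->
    last set0 w1 = last set0 w2 -> w1 = w2.
  move=> [|a1 t1] [|a2 t2] H1 H2; try by [case/and4P: H1|case/and4P: H2].
  by move=> /= E1 E2; subst a1 a2 => El; rewrite (claimA IH H1 H2 El).
move=> w1 w2 H1 H2 Eh El.
have [Hin|Hout] := boolP ((F \in w1) || (F \in w2)).
  have : head set0 w1 = F \/ last set0 w1 = F.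
    case/orP: Hin => Hin; first exact: K2e.
    by rewrite Eh El; apply: K2e.
  case=> [Hf|Hf]; first by apply: Hh => //; rewrite -Eh.
  have := Hh _ _ (pth_rev H1) (pth_rev H2).
  rewrite !head_rev !last_rev -El Hf Eh => /(_ erefl erefl erefl) E.
  by rewrite -(revK w1) E revK.
move: Hout; rewrite negb_or => /andP [N1 N2].
have Hs : forall w, pth P w -> F \notin w -> pth (mem s') w.
  move=> w Hw Nw; apply: (pth_all Hw); apply/allP => x Hx.
  apply: P_neq; first by move: Hw => /and4P [_ /allP H _ _]; apply: H.
  by apply: contraNneq Nw => <-.
exact: IH _ _ (Hs _ H1 N1) (Hs _ H2 N2) Eh El.
Qed.

Lemma exist_step : existPth (mem s') -> (s' != [::] -> exists2 h, h \in s' & R \subset h) ->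
  existPth P.
Proof.
move=> IH Hh.
have HF : forall b, P b -> exists w, pth P w /\ head set0 w = F /\ last set0 w = b.
  move=> b Pb; have [->|Nb] := eqVneq b F.
    by exists [:: F]; split => //; rewrite /pth /= PF.
  have Bs := P_neq Pb Nb.
  have [|h Hs Rh] := Hh; first by case: (s') Bs.
  have [w [Hw [Hw1 Hw2]]] := IH _ _ Hs Bs.
  have Hhas : has (fun g : {set V} => R \subset g) w.
    by case: w Hw Hw1 {Hw2} => [|a t]; [case/and4P|move=> _ /= ->; rewrite Rh].
  have [a0 [t' [Ra0 Ht' Hl Hn]]] := suffix_has Hw Hhas.
  have A0 : a0 \in s' by move: Ht' => /and4P [_ /= /andP [] //].
  have Ht'P := pth_sub Ps' Ht'.
  have EF : F :&: a0 = R.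
    apply: (adj_same HP) => //; [exact: PF|exact: Ps'|exact: cardR|exact: RF|].
    by apply/eqP => E; move: (Hv A0); rewrite -E HvF.
  exists (F :: a0 :: t'); split; last by split => //=; rewrite -/(last _ _) Hl.
  move: Ht'P => /and4P [_ A1 C1 U1]; apply/and4P; split => //.
  - by rewrite /= PF.
  - by rewrite [rdg _]/= /= EF cardR eqxx.
  - rewrite [rdg _]/= /= EF U1 andbT; apply/negP => /rdg_sub [g Hg Hrg].
    by move: Hn => /hasPn /(_ g Hg); rewrite Hrg.
move=> a b Pa Pb.
have [->|Na] := eqVneq a F; first exact: HF.
have As := P_neq Pa Na.
have [->|Nb] := eqVneq b F.
  have [w [Hw [H1 H2]]] := HF _ Pa.
  by exists (rev w); rewrite head_rev last_rev; split => //; apply: pth_rev.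
have [w [Hw [H1 H2]]] := IH _ _ As (P_neq Pb Nb).
by exists w; split => //; apply: pth_sub Hw; apply: Ps'.
Qed.

End Leaf.

End S.
Section S2.
Variable V : finType.
Variable d : nat.
Definition stk (s : seq {set V}) := forall p, 0 < p < size s ->
  exists v : V, nth set0 s p :\: (\bigcup_(G <- take p s) G) = [set v] /\
    exists2 j, j < p & nth set0 s p :\ v \subset nth set0 s j.

Lemma stk_rcons s' F : stk (rcons s' F) -> stk s' /\ (0 < size s' -> exists v,
  F :\: (\bigcup_(G <- s') G) = [set v] /\ exists2 j, j < size s' & F :\ v \subset nth set0 s' j).
Proof.
move=> H; split.
  move=> p /andP [p0 ps].
  have [|v [E [j jp Hj]]] := H p; first by rewrite p0 size_rcons ltnS ltnW.
  exists v; split.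
    by move: E; rewrite nth_rcons ps -cats1 takel_cat ?(ltnW ps).
by exists j => //; move: Hj; rewrite !nth_rcons ps (ltn_trans jp ps).
move=> s0; have [|v [E [j jp Hj]]] := H (size s'); first by rewrite s0 size_rcons ltnSn.
exists v; split.
  by move: E; rewrite nth_rcons ltnn eqxx -cats1 take_size_cat.
by exists j => //; move: Hj; rewrite !nth_rcons ltnn eqxx jp.
Qed.
Lemma stacked_props s : s != [::] -> stk s -> (forall g, g \in s -> #|g| = d.+1) ->
  [/\ uniqPth d (mem s), existPth d (mem s) & #|\bigcup_(G <- s) G| = size s + d].
Proof.
elim/last_ind: s => [//|s' F IH] _ Hs Hc.
have [Hs' HF] := stk_rcons Hs.
have Hc' : forall g, g \in s' -> #|g| = d.+1.
  by move=> g Hg; apply: Hc; rewrite mem_rcons inE Hg orbT.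
have HFc : #|F| = d.+1 by apply: Hc; rewrite mem_rcons mem_head.
rewrite big_rcons /= size_rcons.
case: (eqVneq s' [::]) => [E|Ne].
  subst s'.
  have [v Hv] : exists v, v \in F by apply/set0Pn; rewrite -card_gt0 HFc.
  have U0 : uniqPth d (mem ([::] : seq {set V})) by rewrite /uniqPth /pth => w1 w2 /and4P [H1 H2 _ _]; case: w1 H1 H2.
  have E0 : existPth d (mem ([::] : seq {set V})) by move=> a b; rewrite /= in_nil.
  split.
  - by apply: (uniq_step (v := v)) => //.
  - by apply: (exist_step (v := v)).
  - by rewrite big_nil set0U HFc.
have [U1 E1 C1] := IH Ne Hs' Hc'.
have [v [Ev [j Hj Hsub]]] : exists v, F :\: (\bigcup_(G <- s') G) = [set v] /\ exists2 j, j < size s' & F :\ v \subset nth set0 s' j.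
  by apply: HF; rewrite lt0n size_eq0.
have HvF : v \in F by have := set11 v; rewrite -Ev inE => /andP [].
have HvU : v \notin \bigcup_(G <- s') G by have := set11 v; rewrite -Ev inE => /andP [].
have Hv : forall g, g \in s' -> v \notin g.
  move=> g Hg; apply: contra HvU => Hvg.
  by rewrite bigcup_seq; apply/bigcupP; exists g.
split.
- exact: (uniq_step Hc HvF Hv U1).
- apply: (exist_step Hc HvF Hv E1) => _.
  by exists (nth set0 s' j) => //; apply: mem_nth.
- by rewrite cardUD C1 Ev cards1 addn1 addSn.
Qed.

End S2.
Section S3.
Variable V : finType.
Variable d : nat.

Lemma crossing (P : pred {set V}) (s : seq {set V}) w : pth d P w ->
  head set0 w \in s -> last set0 w \notin s ->
  exists a b, [/\ a \in s, P b, b \notin s & #|a :&: b| = d].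
Proof.
elim: w => [//|a t IH] Hp /=.
case: t IH Hp => [|b t] IH Hp Ha; first by rewrite /= Ha.
have [Hp' Pa Cab _] := pth_cons Hp.
move=> Hl; have [Hb|Hb] := boolP (b \in s).
  by apply: IH => //.
exists a, b; split => //.
by move: Hp' => /and4P [_ /= /andP [] //].
Qed.

Lemma build (P : pred {set V}) f0 : existPth d P -> P f0 -> forall k, k < #|P| ->
  exists s : seq {set V}, [/\ size s = k.+1, uniq s, all P s, nth set0 s 0 = f0 &
    forall p, 0 < p < size s -> exists2 j, j < p & #|nth set0 s p :&: nth set0 s j| = d].
Proof.
move=> HE Pf0; elim=> [_|k IH Hk].
  exists [:: f0]; split => //; first by rewrite /= Pf0.
  by move=> [|p] /andP [].
have [s [Hsz Hu Ha H0 Hadj]] := IH (ltnW Hk).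
have [g /andP [Pg Ng]] : exists g, P g && (g \notin s).
  case: (boolP [exists g, P g && (g \notin s)]) => [/existsP //|].
  rewrite negb_exists => /forallP H; exfalso.
  have : #|P| <= #|s|.
    apply: subset_leq_card; apply/subsetP => x Px.
    by have := H x; rewrite negb_and negbK => /orP [/negP|//].
  by rewrite (card_uniqP Hu) Hsz leqNgt Hk.
have HEg := HE f0 g Pf0 Pg. case: HEg => w [Hw [Hw1 Hw2]].
have [||a [b [As Pb Nb Cab]]] := crossing (s := s) Hw.
  by rewrite Hw1 -H0 mem_nth // Hsz.
  by rewrite Hw2.
exists (rcons s b); split.
- by rewrite size_rcons Hsz.
- by rewrite rcons_uniq Nb Hu.
- by rewrite all_rcons Pb Ha.
- by rewrite nth_rcons Hsz.
move=> p; rewrite size_rcons => /andP [p0]; rewrite ltnS leq_eqVlt => /orP [/eqP ->|ps].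
  exists (index a s); first by rewrite index_mem.
  by rewrite !nth_rcons ltnn eqxx index_mem As nth_index // setIC.
have := Hadj p; rewrite p0 ps => /(_ isT) [j jp Hj].
by exists j => //; rewrite !nth_rcons ps (ltn_trans jp ps).
Qed.

End S3.
Section S4.
Variable V : finType.
Variable d : nat.
Lemma test (s : seq {set V}) : size s + d + 1 = (size s).+1 + d.
Proof. lia. Qed.

Lemma count_stk (s : seq {set V}) : (forall g, g \in s -> #|g| = d.+1) -> 0 < size s ->
  (forall p, 0 < p < size s -> exists2 j, j < p & #|nth set0 s p :&: nth set0 s j| = d) ->
  #|\bigcup_(G <- s) G| = size s + d -> stk s.
Proof.
move=> Hc s0 Hadj Htot.
set n := size s in s0 Hadj Htot *.
pose U p := \bigcup_(G <- take p s) G.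
have Hstep : forall p, p < n -> #|U p.+1| = #|U p| + #|nth set0 s p :\: U p|.
  by move=> p Hp; rewrite /U (take_nth set0 Hp) big_rcons /= cardUD.
have Hsub : forall p, 0 < p < n -> exists2 j, j < p &
    (nth set0 s p :\: U p \subset nth set0 s p :\: nth set0 s j) /\
    #|nth set0 s p :\: nth set0 s j| = 1.
  move=> p /andP [p0 pn]; have := Hadj p; rewrite p0 pn => /(_ isT) [j jp Hj].
  exists j => //; split.
    apply/subsetP => x; rewrite !inE => /andP [Nx ->]; rewrite andbT.
    apply: contra Nx => Hx; rewrite /U bigcup_seq; apply/bigcupP.
    exists (nth set0 s j) => //.
    rewrite -(nth_take set0 jp); apply: mem_nth.
    by rewrite size_takel // ltnW.
  by rewrite cardsD Hj Hc ?mem_nth //; lia.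
have U0 : U 0 = set0 by rewrite /U take0 big_nil.
have U1 : #|U 1| = d.+1 by rewrite Hstep // U0 setD0 cards0 Hc ?mem_nth.
have Hle1 : forall p, 0 < p < n -> #|nth set0 s p :\: U p| <= 1.
  move=> p Hp; have [j _ [H1 H2]] := Hsub p Hp.
  by rewrite -H2 subset_leq_card.
have Hbound : forall p, 0 < p <= n -> #|U p| <= p + d.
  elim=> [|p IH] /andP [p0 Hp] //.
  case: p IH Hp p0 => [|p] IH Hp p0; first by rewrite U1.
  rewrite Hstep //; have := IH (ltnW Hp); have := Hle1 p.+1; rewrite Hp /= => /(_ isT).
  lia.
have Hup : forall p q, 0 < p -> p <= q <= n -> #|U q| <= #|U p| + (q - p).
  move=> p q p0; elim: q => [|q IH]; first by rewrite leqn0 => /andP [/eqP E]; rewrite E in p0.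
  rewrite leq_eqVlt => /andP [/orP [/eqP <-|Hpq] Hq]; first by rewrite subnn addn0.
  rewrite Hstep //; have := IH; rewrite -ltnS Hpq ltnW //= => /(_ isT).
  have := Hle1 q; rewrite Hq andbT; have : 0 < q by apply: leq_trans p0 _; rewrite -ltnS.
  move=> -> /(_ isT); lia.
have Un : U n = \bigcup_(G <- s) G by rewrite /U take_size.
move=> p /andP [p0 pn].
have := Hsub p; rewrite p0 pn => /(_ isT) [j jp [Hs1 Hs2]].
have Hge : 0 < #|nth set0 s p :\: U p|.
  rewrite lt0n; apply/negP => /eqP H0.
  have H1 := Hstep p pn; rewrite H0 addn0 in H1.
  have := Hup p.+1 n isT; rewrite pn leqnn => /(_ isT) H2.
  have := Hbound p; rewrite p0 (ltnW pn) => /(_ isT) H3.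
  by move: H2; rewrite Un Htot H1; lia.
have E : nth set0 s p :\: U p = nth set0 s p :\: nth set0 s j.
  by apply/eqP; rewrite eqEcard Hs1 Hs2.
have /cards1P [v Ev] : #|nth set0 s p :\: nth set0 s j| == 1 by rewrite Hs2.
exists v; split; first exact: (etrans E Ev).
exists j => //; apply/subsetP => x; rewrite !inE => /andP [Nxv Hx].
apply/negPn/negP => Nx.
have : x \in nth set0 s p :\: nth set0 s j by rewrite inE Nx Hx.
by rewrite Ev inE (negbTE Nxv).
Qed.
End S4.

Lemma vertex_in_facet (V : finType) (X : {set {set V}}) : is_complex X ->
  forall x : V, exists2 F, F \in facets X & x \in F.
Proof.
move=> [Hdown Hcov] x; have [G [GX xG]] := Hcov x.
case: (@arg_maxnP _ G (fun H => (H \in X) && (G \subset H)) (fun H => #|H|)).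
  by rewrite GX subxx.
move=> H /andP [HX GH] Hmax; exists H; last by apply: (subsetP GH).
rewrite /facets inE HX /=; apply/forall_inP => K KX; apply/implyP => HK.
rewrite eq_sym eqEcard HK /=; apply: Hmax.
by rewrite KX (subset_trans GH HK).
Qed.

Theorem proposition2p6 (V : finType) (X : {set {set V}}) (d : nat) :
  is_complex X -> pure X d -> 1 <= #|facets X| ->
  (stacked X <->
   (#|V| = #|facets X| + d /\
    forall f f' : {set V}, f \in facets X -> f' \in facets X ->
      exists! w : seq {set V}, is_path_from X d f f' w)).
Proof.
move=> Hcx Hpure Hn.
have Hvert := vertex_in_facet Hcx.
have [f0 Hf0] : exists f0, f0 \in facets X by apply/card_gt0P.
have Hbig : forall s : seq {set V}, (forall F, F \in s <-> F \in facets X) ->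
    \bigcup_(G <- s) G = setT.
  move=> s Hmem; apply/eqP; rewrite eqEsubset subsetT /=; apply/subsetP => x _.
  have [F HF xF] := Hvert x; rewrite bigcup_seq; apply/bigcupP; exists F => //.
  by apply/Hmem.
split.
- case=> d' [Hp' [s [s0 [Hu [Hmem Hstk]]]]].
  have Hc : forall g, g \in s -> #|g| = d.+1 by move=> g /Hmem /Hpure.
  have [|U E C] := stacked_props (d:=d) (s:=s) _ Hstk Hc; first by rewrite -size_eq0 -lt0n.
  have Hsz : #|facets X| = size s.
    rewrite -(card_uniqP Hu); apply: eq_card => g; apply/idP/idP; first by move=> H; apply/Hmem.
    by move/Hmem.
  split; first by rewrite -cardsT -(Hbig s Hmem) C Hsz.
  move=> f f' Hf Hf'.
  have [w [Hw [H1 H2]]] := E f f' (proj2 (Hmem f) Hf) (proj2 (Hmem f') Hf').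
  have Hs : forall x, x \in s -> x \in facets X by move=> x /Hmem.
  exists w; split.
    by apply/is_path_from_pth; split => //; apply: pth_sub Hw.
  move=> w' /is_path_from_pth [Hw' [H1' H2']].
  apply: U => //; last by rewrite H2 H2'.
    apply: (pth_all Hw'); apply/allP => x Hx; apply/Hmem.
    by move: Hw' => /and4P [_ /allP H _ _]; apply: H.
  by rewrite H1 H1'.
- case=> Hcard Hpaths.
  have HE : existPth d (fun g => g \in facets X).
    move=> a b Ha Hb; have [w [Hw _]] := Hpaths a b Ha Hb.
    by move/is_path_from_pth: Hw => [Hw [H1 H2]]; exists w.
  have Hcp : #|(fun g => g \in facets X)| = #|facets X| by apply: eq_card.
  have Hk : #|facets X|.-1 < #|(fun g => g \in facets X)| by rewrite Hcp; lia.
  have [s [Hsz Hu Ha H0 Hadj]] := build HE Hf0 Hk.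
  rewrite prednK // in Hsz.
  have Hsub : mem s \subset facets X by apply/subsetP => x /(allP Ha).
  have Hmem : forall F, F \in s <-> F \in facets X.
    have Hcd : #|s| = #|facets X| by rewrite (card_uniqP Hu) Hsz.
    have H := elimT (subset_cardP Hcd) Hsub.
    by move=> F; rewrite (H F).
  exists d; split => //; exists s; split; first by rewrite Hsz.
  split => //; split => //.
  apply: (count_stk (d:=d)).
  - by move=> g /Hmem /Hpure.
  - by rewrite Hsz.
  - exact: Hadj.
  - by rewrite (Hbig s Hmem) cardsT Hcard Hsz.
Qed.
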